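(* Let $m,k$ be positive integers and $p$ a prime with $(m,k-1)=1$ and $p=\mathrm{ind}_m(k)$; let $G=G(m,p,k)=\langle a,b;\ a^m=1,\ b^p=1,\ b^{-1}ab=a^k\rangle$, $R=\{k^j-1 \bmod m: j\in\mathbb{Z}_p\}$ and $L=\{1-k^j \bmod m: j\in\mathbb{Z}_p\}$. Then every nonzero element of $R^*$ and every nonzero element of $L^*$ is invertible in $\mathbb{Z}_m$, and both $\mathrm{P}(G)$ and $\Lambda(G)$ are complete (i.e. $\Sigma_G(R)$ and $\Sigma_G(L)$ are complete).
   Context: $\mathrm{ind}_m(k)$ is the least positive integer $d$ with $k^d\equiv 1\pmod m$. $S^*$ denotes the multiplicative subsemigroup of $\mathbb{Z}_m$ generated by $S$. Elements of $G$ are written uniquely as $a^ib^j$; $k_t=k^t-1\pmod m$. Commutators are $[x,y]=x^{-1}y^{-1}xy$; $(x)\rho(g)=[x,g]$, $(x)\lambda(g)=[g,x]$; maps are written on the right and composed left to right. $\mathrm{P}(G)$, $\Lambda(G)$ are the semigroups generated by all $\rho(g)$, resp. all $\lambda(g)$; they equal $\Sigma_G(R)$, $\Sigma_G(L)$. For $x,y\in\mathbb{Z}_m$, $(a^ib^j)\mu(x,y)=a^{xik^j-yk_j}$, $C(x,y)=\{\mu(x,yz):z\in\mathbb{Z}_m\}$. For $S\subseteq\mathbb{Z}_m$, $I(S)$ is the set of invertible elements of $S$; a base is $S$ with $0\in S$, $I(S)\neq\varnothing$; $\Sigma_G(S)$ is the semigroup generated by $\{\mu(s,z):s\in S,z\in\mathbb{Z}_m\}$.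 For $x\in S^*$, $Y(x)=\{s^*z: s^*\in S^*, z\in\mathbb{Z}_m, \exists s\in S,\ x\equiv ss^*\}$; the $x$-family $\{C(x,y):y\in Y(x)\}$ is complete if it contains $C(x,1)$, and $\Sigma_G(S)$ is complete if all $x$-families ($x\in S^*$) are complete. *)

(* Defs.v *)
From mathcomp Require Import all_boot all_order all_algebra.
Set Implicit Arguments. Unset Strict Implicit. Unset Printing Implicit Defensive.
Import GRing.Theory.
Local Open Scope ring_scope.

Definition is_ind (m k d : nat) : Prop :=
  [/\ (0 < d)%N, (k ^ d = 1 %[mod m])%N &
      forall d' : nat, (0 < d')%N -> (k ^ d' = 1 %[mod m])%N -> (d <= d')%N].

(* Elements a^i b^j of G(m,p,k), written uniquely as pairs (i, j). *)
Definition Gmp (m p : nat) : finType := ('Z_m * 'Z_p)%type.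

Definition kZ (m k : nat) : 'Z_m := k%:R.

Definition kt (m k t : nat) : 'Z_m := kZ m k ^+ t - 1.

Definition mu (m p k : nat) (x y : 'Z_m) : {ffun Gmp m p -> Gmp m p} :=
  [ffun g : Gmp m p => (x * g.1 * kZ m k ^+ g.2 - y * kt m k g.2, 0 : 'Z_p)].

Definition Cset (m p k : nat) (x y : 'Z_m) : {set {ffun Gmp m p -> Gmp m p}} :=
  [set mu p k x (y * z) | z : 'Z_m].

Inductive sgen (m : nat) (S : {set 'Z_m}) : 'Z_m -> Prop :=
| sgen_base s : s \in S -> sgen S s
| sgen_mul a b : sgen S a -> sgen S b -> sgen S (a * b).

Definition Yset (m : nat) (S : {set 'Z_m}) (x y : 'Z_m) : Prop :=
  exists (ss z : 'Z_m), [/\ sgen S ss, y = ss * z & (exists2 s, s \in S & x = s * ss)].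

Definition family_complete (m p k : nat) (S : {set 'Z_m}) (x : 'Z_m) : Prop :=
  exists2 y, Yset S x y & Cset p k x y = Cset p k x 1.

Definition Sigma_complete (m p k : nat) (S : {set 'Z_m}) : Prop :=
  forall x, sgen S x -> family_complete p k S x.

Definition Rset (m p k : nat) : {set 'Z_m} := [set kZ m k ^+ j - 1 | j : 'Z_p].
Definition Lset (m p k : nat) : {set 'Z_m} := [set 1 - kZ m k ^+ j | j : 'Z_p].

(* Main.v *)
Require Import Defs.
From mathcomp Require Import all_boot all_order all_algebra all_fingroup.
Import GRing.Theory.
Local Open Scope ring_scope.

Lemma unit_pow (R : finUnitRingType) (u : R) :
  u \is a GRing.unit -> exists n, u ^+ n.+1 = 1.
Proof.
move=> uU; pose U := FinRing.unit R uU.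
exists (#[U]%g).-1; rewrite prednK ?order_gt0 //.
have := congr1 val (expg_order U); rewrite FinRing.val_unitX FinRing.val_unit1.
by [].
Qed.

Lemma sgen_pow (m : nat) (S : {set 'Z_m}) a b i :
  sgen S a -> sgen S b -> sgen S (b ^+ i * a).
Proof.
move=> Sa Sb; elim: i => [|i IH]; first by rewrite expr0 mul1r.
by rewrite exprS -mulrA; apply: sgen_mul.
Qed.

Lemma sgen_unit0 (m : nat) (S : {set 'Z_m}) :
  (forall s, s \in S -> s = 0 \/ s \is a GRing.unit) ->
  forall x, sgen S x -> x != 0 -> x \is a GRing.unit.
Proof.
move=> HS x Sx; suff: x = 0 \/ x \is a GRing.unit.
  by case=> [->|//]; rewrite eqxx.
elim: Sx => [s /HS //|a b _ [->|aU] _ [->|bU]].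
- by left; rewrite mul0r.
- by left; rewrite mul0r.
- by left; rewrite mulr0.
- by right; rewrite unitrM aU.
Qed.

Lemma complete_of (m p k : nat) (S : {set 'Z_m}) (u : 'Z_m) :
  0 \in S -> u \in S -> u \is a GRing.unit ->
  (forall x, sgen S x -> x != 0 -> x \is a GRing.unit) -> Sigma_complete p k S.
Proof.
move=> S0 Su uU Hu x Sx.
have [n un] := @unit_pow _ u uU.
have CU : forall y, y \is a GRing.unit -> Cset p k x y = Cset p k x 1.
  move=> y yU; apply/setP => f; apply/imsetP/imsetP => [[z _ ->]|[z _ ->]].
    by exists (y * z) => //; rewrite mul1r.
  by exists (y^-1 * z) => //; rewrite mulrA divrr // mul1r.
have [x0|x0] := eqVneq x 0.
  exists u; last exact: CU.
  exists u, 1; split; first exact: sgen_base.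
    by rewrite mulr1.
  by exists 0 => //; rewrite x0 mul0r.
exists (u ^+ n * x); last by apply: CU; rewrite unitrM unitrX // Hu.
exists (u ^+ n * x), 1; split.
- by apply: sgen_pow => //; apply: sgen_base.
- by rewrite mulr1.
- by exists u => //; rewrite mulrA -exprS un mul1r.
Qed.

Lemma key_coprime (m k p j : nat) :
  (0 < k)%N -> prime p -> coprime m (k - 1) -> (k ^ p = 1 %[mod m])%N ->
  (0 < j)%N -> (j < p)%N -> coprime m (k ^ j - 1).
Proof.
move=> k0 pp cmk kp j0 jp.
set d := gcdn m (k ^ j - 1).
have dm : (d %| m)%N by apply: dvdn_gcdl.
have kj1 : (k ^ j = 1 %[mod d])%N.
  apply/eqP; rewrite eqn_mod_dvd ?expn_gt0 ?k0 //; exact: dvdn_gcdr.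
have kp1 : (k ^ p = 1 %[mod d])%N by rewrite -(modn_dvdm _ dm) kp modn_dvdm.
have [a _ Ha] := Bezoutl j (prime_gt0 pp).
have cpj : coprime p j.
  by rewrite prime_coprime // gtnNdvd.
rewrite (eqP cpj) in Ha.
have [c Hc] := dvdnP Ha.
have k1 : (k = 1 %[mod d])%N.
  have e1 : (k ^ (a * j) * k = k ^ (c * p) %[mod d])%N.
    by rewrite -expnSr -Hc addnC addn1.
  rewrite [(a * j)%N]mulnC expnM -modnMml -modnXm kj1 modnXm exp1n modnMml mul1n in e1.
  by rewrite e1 [(c * p)%N]mulnC expnM -modnXm kp1 modnXm exp1n.
have dk : (d %| k - 1)%N.
  by rewrite -eqn_mod_dvd // k1.
have : (d %| gcdn m (k - 1))%N by rewrite dvdn_gcd dm dk.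
by rewrite (eqP cmk) dvdn1.
Qed.

Theorem theorem6p5 (m k p : nat) :
  (0 < m)%N -> (0 < k)%N -> prime p -> coprime m (k - 1) -> is_ind m k p ->
  [/\ (forall x : 'Z_m, sgen (Rset m p k) x -> x != 0 -> x \is a GRing.unit),
      (forall x : 'Z_m, sgen (Lset m p k) x -> x != 0 -> x \is a GRing.unit),
      Sigma_complete p k (Rset m p k) &
      Sigma_complete p k (Lset m p k)].
Proof.
move=> m0 k0 pp cmk [_ kp pmin].
have p1 : (1 < p)%N := prime_gt1 pp.
have m1 : (1 < m)%N.
  case: m m0 cmk kp pmin => [//|[|m']] // _ _ _ pmin.
  have := pmin 1%N isT; rewrite !modn1 => /(_ erefl).
  by rewrite leqNgt p1.
have HR : forall j : 'Z_p, kZ m k ^+ j - 1 = 0 \/ kZ m k ^+ j - 1 \is a GRing.unit.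
  move=> j; have [->|j0] := posnP j; first by left; rewrite expr0 subrr.
  right; have -> : kZ m k ^+ j - 1 = (k ^ j - 1)%:R.
    by rewrite natrB ?expn_gt0 ?k0 // natrX.
  rewrite unitZpE //.
  apply: (@key_coprime m k p) => //.
  by apply: leq_trans (ltn_ord j) _; rewrite Zp_cast.
have R0 : sgen (Rset m p k) =1 sgen (Rset m p k) by [].
have HRs : forall s, s \in Rset m p k -> s = 0 \/ s \is a GRing.unit.
  by move=> s /imsetP[j _ ->]; apply: HR.
have HLs : forall s, s \in Lset m p k -> s = 0 \/ s \is a GRing.unit.
  move=> s /imsetP[j _ ->]; rewrite -opprB unitrN.
  by case: (HR j) => [->|]; [left; rewrite oppr0|right].
pose j1 : 'Z_p := Ordinal (isT : (1 < (Zp_trunc p).+2)%N).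
pose j0 : 'Z_p := Ordinal (isT : (0 < (Zp_trunc p).+2)%N).
have u1 : kZ m k ^+ j1 - 1 \is a GRing.unit.
  have -> : kZ m k ^+ j1 - 1 = (k ^ 1 - 1)%:R.
    by rewrite natrB ?expn_gt0 ?k0 // natrX.
  rewrite unitZpE //.
split.
- exact: sgen_unit0.
- exact: sgen_unit0.
- apply: (@complete_of m p k _ (kZ m k ^+ j1 - 1)).
  + by apply/imsetP; exists j0 => //; rewrite /= expr0 subrr.
  + by apply/imsetP; exists j1.
  + exact: u1.
  + exact: sgen_unit0.
- apply: (@complete_of m p k _ (1 - kZ m k ^+ j1)).
  + by apply/imsetP; exists j0 => //; rewrite /= expr0 subrr.
  + by apply/imsetP; exists j1.
  + by rewrite -opprB unitrN.
  + exact: sgen_unit0.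
Qed.
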